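(* Let $X,Y$ be $L$-topological spaces and $f:X\to Y$ a continuous map. Then $f$ is a quasihomeomorphism if and only if the map ${\rm pt}_L\mathcal O(f):{\rm pt}_L\mathcal O(X)\to{\rm pt}_L\mathcal O(Y)$, $p\mapsto p\circ f^\leftarrow$, is a homeomorphism (with respect to the spectral $L$-topologies).
   Context: $L$ is a frame. $L$-subsets of $X$ are maps $X\to L$; $a_X$ constant. An $L$-topology on $X$ is $\mathcal O(X)\subseteq L^X$ closed under finite meets and arbitrary joins containing all constants; $f$ continuous if $f^\leftarrow(B)=B\circ f$ is open for every open $B$; here $f^\leftarrow$ is regarded as a map $\mathcal O(Y)\to\mathcal O(X)$. $f$ is a quasihomeomorphism if $f^\leftarrow:\mathcal O(Y)\to\mathcal O(X)$ is a bijection. A point of $\mathcal O(X)$ is $p:\mathcal O(X)\to L$ preserving binary meets and arbitrary joins with $p(\lambda_X)=\lambda$ for all $\lambda\in L$; ${\rm pt}_L\mathcal O(X)$ is the set of points, carrying the spectral $L$-topology $\{\phi(A):A\in\mathcal O(X)\}$ with $\phi(A)(p)=p(A)$. A homeomorphism is a bijection that is continuous with continuous inverse. *)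

(* Defs.v *)
Set Implicit Arguments.
Unset Strict Implicit.

Record frame := Frame {
  fcar :> Type;
  fle : fcar -> fcar -> Prop;
  fmeet : fcar -> fcar -> fcar;
  fsup : (fcar -> Prop) -> fcar;
  fle_refl : forall a, fle a a;
  fle_trans : forall a b c, fle a b -> fle b c -> fle a c;
  fle_antisym : forall a b, fle a b -> fle b a -> a = b;
  fmeet_glb : forall a b c, fle c (fmeet a b) <-> (fle c a /\ fle c b);
  fsup_lub : forall (S : fcar -> Prop) c, fle (fsup S) c <-> (forall s, S s -> fle s c);
  fmeet_sup_distr : forall a (S : fcar -> Prop),
    fmeet a (fsup S) = fsup (fun y => exists s, S s /\ y = fmeet a s)
}.

Definition fjoin (L : frame) (I : Type) (F : I -> L) : L :=
  @fsup L (fun l => exists i, l = F i).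

Record ltop (L : frame) := LTop {
  lpts :> Type;
  lopen : (lpts -> L) -> Prop;
  lopen_const : forall l : L, lopen (fun _ => l);
  lopen_meet : forall A B, lopen A -> lopen B -> lopen (fun x => @fmeet L (A x) (B x));
  lopen_join : forall (I : Type) (F : I -> lpts -> L),
      (forall i, lopen (F i)) -> lopen (fun x => fjoin (fun i => F i x))
}.

Definition lcont (L : frame) (X Y : Type) (OX : (X -> L) -> Prop) (OY : (Y -> L) -> Prop)
  (f : X -> Y) : Prop :=
  forall B, OY B -> OX (fun x => B (f x)).

Definition continuous (L : frame) (X Y : ltop L) (f : X -> Y) : Prop :=
  lcont (@lopen L X) (@lopen L Y) f.

Definition lhomeo (L : frame) (X Y : Type) (OX : (X -> L) -> Prop) (OY : (Y -> L) -> Prop)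
  (g : X -> Y) : Prop :=
  exists h : Y -> X, (forall x, h (g x) = x) /\ (forall y, g (h y) = y) /\
    lcont OX OY g /\ lcont OY OX h.

Definition opens (L : frame) (X : ltop L) := { A : X -> L | @lopen L X A }.

Definition preimg (L : frame) (X Y : ltop L) (f : X -> Y) (hf : continuous f)
  (B : opens Y) : opens X :=
  exist _ (fun x => proj1_sig B (f x)) (hf (proj1_sig B) (proj2_sig B)).

Definition quasihomeo (L : frame) (X Y : ltop L) (f : X -> Y) (hf : continuous f) : Prop :=
  (forall B1 B2, preimg hf B1 = preimg hf B2 -> B1 = B2) /\
  (forall A : opens X, exists B, preimg hf B = A).

Definition is_point (L : frame) (X : ltop L) (p : opens X -> L) : Prop :=
  (forall (A B C : opens X),
      (forall x, proj1_sig C x = @fmeet L (proj1_sig A x) (proj1_sig B x)) ->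
      p C = @fmeet L (p A) (p B)) /\
  (forall (I : Type) (F : I -> opens X) (J : opens X),
      (forall x, proj1_sig J x = fjoin (fun i => proj1_sig (F i) x)) ->
      p J = fjoin (fun i => p (F i))) /\
  (forall (l : L) (C : opens X), (forall x, proj1_sig C x = l) -> p C = l).

Definition pt (L : frame) (X : ltop L) := { p : opens X -> L | is_point p }.

(** Spectral L-topology on pt_L O(X): { phi(A) | A in O(X) }, phi(A)(p) = p(A). *)
Definition spectral_open (L : frame) (X : ltop L) (Phi : pt X -> L) : Prop :=
  exists A : opens X, forall p : pt X, Phi p = proj1_sig p A.

Lemma point_comp_preimg (L : frame) (X Y : ltop L) (f : X -> Y) (hf : continuous f)
  (p : opens X -> L) : is_point p -> is_point (fun B => p (preimg hf B)).
Proof.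
  intros [Hm [Hj Hc]]. split; [|split].
  - intros A B C H. apply Hm. intro x. simpl. apply H.
  - intros I F J H. apply (Hj I (fun i => preimg hf (F i))). intro x. simpl. apply H.
  - intros l C H. apply Hc. intro x. simpl. apply H.
Qed.

Definition ptmap (L : frame) (X Y : ltop L) (f : X -> Y) (hf : continuous f)
  (p : pt X) : pt Y :=
  exist _ (fun B => proj1_sig p (preimg hf B)) (point_comp_preimg hf (proj2_sig p)).

(* Main.v *)
Require Import Defs.
From Stdlib Require Import FunctionalExtensionality ProofIrrelevance IndefiniteDescription.

Lemma opens_eq (L : frame) (X : ltop L) (A B : opens X) :
  (forall x, proj1_sig A x = proj1_sig B x) -> A = B.
Proof.
  destruct A as [a ha], B as [b hb]; simpl; intro H.
  assert (a = b) by (apply functional_extensionality; exact H). subst.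
  f_equal; apply proof_irrelevance.
Qed.

Lemma pt_eq (L : frame) (X : ltop L) (p q : pt X) :
  (forall A, proj1_sig p A = proj1_sig q A) -> p = q.
Proof.
  destruct p as [a ha], q as [b hb]; simpl; intro H.
  assert (a = b) by (apply functional_extensionality; exact H). subst.
  f_equal; apply proof_irrelevance.
Qed.

Definition evpt (L : frame) (X : ltop L) (x : X) : pt X.
Proof.
  refine (exist _ (fun A : opens X => proj1_sig A x) _).
  split; [|split].
  - intros A B C H. apply H.
  - intros I F J H. apply H.
  - intros l C H. apply H.
Defined.

Arguments evpt {L X} x.

Theorem proposition3p11 (L : frame) (X Y : ltop L) (f : X -> Y) (hf : continuous f) :
  quasihomeo hf <-> lhomeo (@spectral_open L X) (@spectral_open L Y) (ptmap hf).
Proof.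
  split.
  - intros [Hinj Hsur].
    set (g := fun A : opens X => proj1_sig (constructive_indefinite_description _ (Hsur A))).
    assert (Hg1 : forall A, preimg hf (g A) = A).
    { intro A. unfold g. destruct (constructive_indefinite_description _ (Hsur A)); simpl; auto. }
    assert (Hg2 : forall B, g (preimg hf B) = B).
    { intro B. apply Hinj. apply Hg1. }
    assert (Hg1x : forall A x, proj1_sig (g A) (f x) = proj1_sig A x).
    { intros A x. rewrite <- (Hg1 A) at 2. reflexivity. }
    assert (Hpt : forall q : pt Y, is_point (fun A => proj1_sig q (g A))).
    { intros [q [Qm [Qj Qc]]]; simpl. split; [|split].
      - intros A B C H.
        set (D := exist (fun d => @lopen L Y d) (fun y => fmeet (proj1_sig (g A) y) (proj1_sig (g B) y))
                   (lopen_meet (proj2_sig (g A)) (proj2_sig (g B))) : opens Y).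
        assert (E : g C = D).
        { rewrite <- (Hg2 D). f_equal. apply opens_eq. intro x. simpl.
          rewrite H, !Hg1x. reflexivity. }
        rewrite E. apply Qm. intro; reflexivity.
      - intros I F J H.
        set (D := exist (fun d => @lopen L Y d) (fun y => fjoin (fun i => proj1_sig (g (F i)) y))
                   (@lopen_join L Y I (fun i => proj1_sig (g (F i))) (fun i => proj2_sig (g (F i)))) : opens Y).
        assert (E : g J = D).
        { rewrite <- (Hg2 D). f_equal. apply opens_eq. intro x. simpl.
          rewrite H. f_equal. apply functional_extensionality. intro i.
          symmetry; apply Hg1x. }
        rewrite E. apply (Qj I (fun i => g (F i))). intro; reflexivity.
      - intros l C H.
        set (D := exist (fun d => @lopen L Y d) (fun _ => l) (lopen_const Y l) : opens Y).
        assert (E : g C = D).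
        { rewrite <- (Hg2 D). f_equal. apply opens_eq. intro x. simpl. apply H. }
        rewrite E. apply Qc. intro; reflexivity. }
    exists (fun q => exist _ _ (Hpt q)).
    split; [|split; [|split]].
    + intro p. apply pt_eq. intro A. simpl. rewrite Hg1. reflexivity.
    + intro q. apply pt_eq. intro B. simpl. rewrite Hg2. reflexivity.
    + intros Phi [B HB]. exists (preimg hf B). intro p. rewrite HB. reflexivity.
    + intros Phi [A HA]. exists (g A). intro q. rewrite HA. reflexivity.
  - intros [h [Hhg [Hgh [Hc1 Hc2]]]]. split.
    + intros B1 B2 E. apply opens_eq. intro y.
      change (proj1_sig (evpt y) B1 = proj1_sig (evpt y) B2).
      rewrite <- (Hgh (evpt y)). simpl. rewrite E. reflexivity.
    + intro A.
      destruct (Hc2 (fun p => proj1_sig p A) (ex_intro _ A (fun p => eq_refl))) as [B HB].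
      exists B. apply opens_eq. intro x. simpl.
      change (proj1_sig (evpt (f x)) B = proj1_sig (evpt x) A).
      rewrite <- (Hhg (evpt x)). rewrite HB. reflexivity.
Qed.
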